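(* Consider the data-selling model described in the context, with network $G$ on $n$ buyers, prior precision $z_0>0$ and marginal cost $\gamma>0$. Assume $$z_0<\frac{1}{2\sqrt{\gamma}}\cdot\frac{n+1}{2n+1}.$$ Let $m=\alpha(G)$ be the independence number of $G$. Then every optimal contract $C$ has the following form: (i) the target set $M(C)$ is a maximum independent set of $G$; (ii) the common precision is $z=\sqrt{m/\gamma}-z_0$, and the price is $p_i=\frac{1}{z_0}-\sqrt{\gamma/m}$ for every $i\in M(C)$.
   Context: Model. There is a finite set of buyers $N=\{1,\dots,n\}$ and an undirected network $G$ on $N$: for $i\neq j$, $g_{ij}=g_{ji}\in\{0,1\}$, with $g_{ij}=1$ iff $i$ and $j$ are linked. $N_i=\{j\neq i: g_{ij}=1\}$ is the set of neighbors of $i$ and $n_i=|N_i|$. A state $\theta\sim N(0,1/z_0)$ with $z_0>0$ is unknown to all. A contract $C$ of the seller consists of a target set $M(C)\subseteq N$, a common precision $z>0$, and prices $p_i\ge 0$ for $i\in M(C)$ (buyers outside $M(C)$ get nothing and pay nothing; quality discrimination is not allowed, so all targeted buyers get the same precision $z$). Each $i\in M(C)$ receives a signal $s_i=\theta+\varepsilon_i$, with $\varepsilon_i\sim N(0,1/z)$ independent of $\theta$ and of each other. Each buyer observes the signals of his neighbors in $M(C)$ (and his own if he is in $M(C)$) and then chooses $a_i\in\mathbb{R}$ to maximize $E[-(a_i-\theta)^2]$. Write $m_i=|N_i\cap M(C)|$. Under optimal (Bayesian) actions, buyer $i\in M(C)$ gets expected payoff $-\frac{1}{z_0+(m_i+1)z}-p_i$,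 and buyer $i\notin M(C)$ gets $-\frac{1}{z_0+m_i z}$. Buyer $i\in M(C)$ accepts iff $p_i\le p(m_i,z):=\frac{1}{z_0+m_iz}-\frac{1}{z_0+(m_i+1)z}$. A contract is feasible if every $i\in M(C)$ accepts. The seller's profit is $\pi(C)=\sum_{i\in M(C)}p_i-\gamma z$ with $\gamma>0$. An optimal contract is a feasible contract maximizing $\pi$. An independent set of $G$ is a set of nodes no two of which are linked. A maximum independent set is an independent set of largest cardinality, and this cardinality is the independence number $\alpha(G)$. *)

(* Defs.v *)
From HB Require Import structures.
From mathcomp Require Import all_boot all_order all_algebra.
From mathcomp Require Import reals.
Set Implicit Arguments. Unset Strict Implicit. Unset Printing Implicit Defensive.
Import Order.TTheory GRing.Theory Num.Theory.
Local Open Scope ring_scope.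

Definition simple_graph (n : nat) (g : rel 'I_n) : Prop :=
  (forall i j, g i j = g j i) /\ (forall i, ~~ g i i).

Definition nbhd (n : nat) (g : rel 'I_n) (i : 'I_n) : {set 'I_n} :=
  [set j | (j != i) && g i j].

Definition independent (n : nat) (g : rel 'I_n) (S : {set 'I_n}) : bool :=
  [forall i in S, forall j in S, ~~ g i j].

Definition alpha (n : nat) (g : rel 'I_n) : nat :=
  \max_(S : {set 'I_n} | independent g S) #|S|.

Definition max_independent (n : nat) (g : rel 'I_n) (S : {set 'I_n}) : Prop :=
  independent g S /\ #|S| = alpha g.

(* A contract: target set M(C), common precision z, prices p_i (used for i in M(C)). *)
Record contract (R : realType) (n : nat) := Contract {
  target : {set 'I_n};
  prec : R;
  price : 'I_n -> R }.

Definition m_of (n : nat) (g : rel 'I_n) (M : {set 'I_n}) (i : 'I_n) : nat :=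
  #|nbhd g i :&: M|.

Definition pmax (R : realType) (z0 : R) (m : nat) (z : R) : R :=
  (z0 + m%:R * z)^-1 - (z0 + (m.+1)%:R * z)^-1.

Definition feasible (R : realType) (n : nat) (g : rel 'I_n) (z0 : R)
  (C : contract R n) : Prop :=
  0 < prec C /\
  forall i, i \in target C ->
    0 <= price C i /\ price C i <= pmax z0 (m_of g (target C) i) (prec C).

Definition profit (R : realType) (n : nat) (gamma : R) (C : contract R n) : R :=
  \sum_(i in target C) price C i - gamma * prec C.

Definition optimal (R : realType) (n : nat) (g : rel 'I_n) (z0 gamma : R)
  (C : contract R n) : Prop :=
  feasible g z0 C /\
  forall C' : contract R n, feasible g z0 C' -> profit gamma C' <= profit gamma C.

(* Main.v *)
Require Import Defs.
From HB Require Import structures.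
From mathcomp Require Import all_boot all_order all_algebra.
From mathcomp Require Import reals.
From mathcomp Require Import ring lra.
Import Order.TTheory GRing.Theory Num.Theory.
Local Open Scope ring_scope.

Lemma caro_wei (R : realFieldType) n (g : rel 'I_n) : simple_graph g ->
  forall M : {set 'I_n}, exists J : {set 'I_n}, [/\ J \subset M, independent g J &
    \sum_(i in M) ((m_of g M i).+1%:R)^-1 <= (#|J|%:R : R)].
Proof.
move=> [Hsym Hirr] M; have [k] := ubnP #|M|; elim: k M => // k IH M HM.
case: (set_0Vmem M) => [->|[v0 Hv0]].
  exists set0; split; rewrite ?sub0set ?big_set0 ?cards0 //.
  by apply/forallP => i; apply/implyP; rewrite in_set0.
case: (arg_minnP (fun i => m_of g M i) Hv0) => v Hv Hmin.
have {}Hv : v \in M := Hv.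
set N' := v |: (nbhd g v :&: M).
set M' := M :\: N'.
have HM' : (#|M'| < k)%N.
  have : M' \subset M :\ v.
    by apply/subsetP => x; rewrite !inE => /andP[/norP[-> _] ->].
  move/subset_leq_card => H; rewrite (cardsD1 v M) Hv /= in HM.
  by apply: leq_ltn_trans H _.
have [J' [HJ'M HJ'i HJ'w]] := IH M' HM'.
have vJ' : v \notin J'.
  apply/negP => /(subsetP HJ'M); by rewrite !inE eqxx.
exists (v |: J'); split.
- apply/subsetP => x; rewrite !inE => /orP[/eqP -> //|/(subsetP HJ'M)].
  by rewrite inE => /andP[_ ->].
- have nvJ : forall j, j \in J' -> ~~ g v j.
    move=> j /(subsetP HJ'M); rewrite !inE negb_or => /andP[/andP[/negbTE jv]].
    rewrite jv /= => H Hj; apply/negP => Hg; move/negP: H; apply; by rewrite Hg Hj.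
  rewrite /independent.
  apply/forallP => i; apply/implyP; rewrite in_setU1 => Hi.
  apply/forallP => j; apply/implyP; rewrite in_setU1 => Hj.
  case/orP: Hi => [/eqP ->|Hi]; case/orP: Hj => [/eqP ->|Hj].
  + exact: Hirr.
  + exact: nvJ.
  + rewrite Hsym; exact: nvJ.
  + by move/forallP: HJ'i => /(_ i); rewrite Hi => /forallP /(_ j); rewrite Hj.
- rewrite cardsU1 vJ' /= natrD (big_setID N') /=.
  apply: lerD.
  + apply: le_trans (_ : \sum_(i in M :&: N') ((m_of g M v).+1%:R)^-1 <= _).
      apply: ler_sum => i; rewrite inE => /andP[Hi _].
      rewrite lef_pV2 ?posrE ?ltr0n // ler_nat ltnS; exact: Hmin.
    rewrite sumr_const -(mulr_natl _ #|M :&: N'|) ler_pdivrMr ?ltr0n // mul1r ler_nat.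
    apply: leq_trans (subset_leq_card (subsetIr M N')) _.
    rewrite cardsU1 /m_of; case: (_ \notin _) => //=; exact: leqnSn.
  + apply: le_trans HJ'w; apply: ler_sum => i Hi.
    rewrite lef_pV2 ?posrE ?ltr0n // ler_nat ltnS.
    apply: subset_leq_card; apply: setIS; apply/subsetP => x; rewrite inE.
    by case/andP.
Qed.

Section Alg.
Variable R : realType.

Lemma pmaxE (z0 z : R) m : 0 < z0 -> 0 <= z ->
  pmax z0 m z = z / ((z0 + m%:R * z) * (z0 + m%:R * z + z)).
Proof.
move=> h0 hz; rewrite /pmax -addn1 natrD mulrDl mul1r addrA.
have hm : 0 <= m%:R * z by apply: mulr_ge0; rewrite ?ler0n.
have h1 : 0 < z0 + m%:R * z by lra.
have h2 : 0 < z0 + m%:R * z + z by lra.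
field; apply/andP; split; by rewrite gt_eqF.
Qed.

Lemma pmax0E (z0 z : R) : 0 < z0 -> 0 <= z -> pmax z0 0 z = z / (z0 * (z0 + z)).
Proof. by move=> h0 hz; rewrite pmaxE // mul0r addr0. Qed.

Lemma frac_le (a b c d : R) : 0 < b -> 0 < d -> a * d <= c * b -> a / b <= c / d.
Proof.
move=> hb hd h; rewrite ler_pdivrMr // mulrAC ler_pdivlMr //.
Qed.

Lemma frac_lt (a b c d : R) : 0 < b -> 0 < d -> a * d < c * b -> a / b < c / d.
Proof.
move=> hb hd h; rewrite ltr_pdivrMr // mulrAC ltr_pdivlMr //.
Qed.

Lemma small_bound (z0 z : R) m : 0 < z0 -> 0 < z -> z <= z0 / 2 ->
  pmax z0 m z <= (m.+1%:R)^-1 * (3 / (8 * z0)).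
Proof.
move=> h0 hz hz2; rewrite (@pmaxE z0 z m h0 (ltW hz)).
set x := m%:R.
have hx : 0 <= x by rewrite /x ler0n.
rewrite (_ : m.+1%:R = x + 1); last by rewrite -addn1 natrD.
rewrite (_ : (x + 1)^-1 * (3 / (8 * z0)) = 3 / ((x + 1) * (8 * z0))); last first.
  by field; apply/andP; split; apply/lt0r_neq0; lra.
have hm : 0 <= x * z by apply: mulr_ge0 => //; lra.
apply: frac_le.
- apply: mulr_gt0; lra.
- apply: mulr_gt0; lra.
- have e1 : 0 <= z0 * (z0 - 2 * z) by apply: mulr_ge0; lra.
  have e2 : 0 <= (3 * (x * z) - z0) ^+ 2 by apply: sqr_ge0.
  have e3 : 0 <= (x * z) * z by apply: mulr_ge0 => //; lra.
  have e4 : 0 <= z0 * z0 by nra.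
  nra.
Qed.

Lemma large_bound (z0 z : R) m : 0 < z0 -> z0 / 2 < z ->
  (pmax z0 m z <= (m.+1%:R)^-1 * pmax z0 0 z) /\
  (pmax z0 m z = (m.+1%:R)^-1 * pmax z0 0 z -> m = 0%N).
Proof.
move=> h0 hz2; have hz : 0 < z by lra.
rewrite (@pmax0E z0 z h0 (ltW hz)) (@pmaxE z0 z m h0 (ltW hz)).
set x := m%:R.
have hx : 0 <= x by rewrite /x ler0n.
rewrite (_ : m.+1%:R = x + 1); last by rewrite -addn1 natrD.
rewrite (_ : (x + 1)^-1 * (z / (z0 * (z0 + z))) = z / ((x + 1) * (z0 * (z0 + z)))); last first.
  by field; rewrite !lt0r_neq0 //; lra.
have hm : 0 <= x * z by apply: mulr_ge0 => //; lra.
have hb : 0 < (z0 + x * z) * (z0 + x * z + z) by apply: mulr_gt0; lra.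
have hd : 0 < (x + 1) * (z0 * (z0 + z)) by apply: mulr_gt0; [lra|apply: mulr_gt0; lra].
have key : (x + 1) * (z0 * (z0 + z)) + x * (z0 * z + (x + 1) * z * z - z0 * z0)
   = (z0 + x * z) * (z0 + x * z + z) by ring.
have hxq : 0 <= x * (z0 * z + (x + 1) * z * z - z0 * z0).
  case: m @x hx hm hb hd key => [|m] x hx hm hb hd key; first by rewrite /x mul0r.
  have hx1 : 1 <= x by rewrite /x ler1n.
  apply: mulr_ge0 => //; nra.
split.
  apply: frac_le => //; apply: ler_wpM2l; first lra.
  by rewrite -key lerDl.
case: m @x hx hm hb hd key hxq => [//|m] x hx hm hb hd key _ Heq; exfalso.
have hx1 : 1 <= x by rewrite /x ler1n.
have : z / ((z0 + x * z) * (z0 + x * z + z)) < z / ((x + 1) * (z0 * (z0 + z))).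
  apply: frac_lt => //; rewrite ltr_pM2l //.
  rewrite -key ltrDl; apply: mulr_gt0; nra.
by rewrite Heq ltxx.
Qed.

Lemma val_opt (z0 g s : R) : 0 < z0 -> z0 < s -> 0 < g ->
  (g * s ^+ 2) * pmax z0 0 (s - z0) - g * (s - z0) = g * (s - z0) ^+ 2 / z0.
Proof.
move=> h0 hs hg; rewrite pmax0E //; last lra.
by field; rewrite !lt0r_neq0 //; lra.
Qed.

Lemma val_gap (z0 g s z : R) : 0 < z0 -> z0 < s -> 0 < g -> 0 < z ->
  (g * s ^+ 2) * pmax z0 0 (s - z0) - g * (s - z0)
  - ((g * s ^+ 2) * pmax z0 0 z - g * z) = g * (s - (z0 + z)) ^+ 2 / (z0 + z).
Proof.
move=> h0 hs hg hz; rewrite pmax0E //; last lra.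
rewrite pmax0E //; last lra.
by field; rewrite !lt0r_neq0 //; lra.
Qed.

Lemma val_small (z0 g s : R) : 0 < z0 -> 3 * z0 < s -> 0 < g ->
  (g * s ^+ 2) * (3 / (8 * z0)) < g * (s - z0) ^+ 2 / z0.
Proof.
move=> h0 hs hg.
rewrite (_ : (g * s ^+ 2) * (3 / (8 * z0)) = (3 * g * s ^+ 2) / (8 * z0)); last first.
  by field; rewrite lt0r_neq0.
apply: frac_lt => //; first lra.
have h : 0 < 8 * (s - z0) ^+ 2 - 3 * s ^+ 2 by nra.
have h2 : 0 < g * z0 by apply: mulr_gt0.
have := mulr_gt0 h2 h.
move=> h3; nra.
Qed.
End Alg.

Lemma sum_eq_le (R : realType) (I : finType) (P : pred I) (F G : I -> R) :
  (forall i, P i -> F i <= G i) ->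
  \sum_(i | P i) G i <= \sum_(i | P i) F i -> forall i, P i -> F i = G i.
Proof.
move=> H Hs i Pi; apply/eqP; rewrite eq_le H //=; rewrite leNgt; apply/negP => Hlt.
move: Hs; rewrite (bigD1 i Pi) [X in _ <= X](bigD1 i Pi) /=.
have : \sum_(j | P j && (j != i)) F j <= \sum_(j | P j && (j != i)) G j.
  by apply: ler_sum => j /andP[Pj _]; apply: H.
move=> h1 h2; lra.
Qed.

Lemma m0_indep n (g : rel 'I_n) (S : {set 'I_n}) i :
  independent g S -> i \in S -> m_of g S i = 0%N.
Proof.
move=> HS iS; apply/eqP; rewrite cards_eq0; apply/eqP/setP => j; rewrite !inE.
apply/negbTE; apply/negP => /andP[/andP[_ gij] jS].
move/forallP: HS => /(_ i); rewrite iS /= => /forallP /(_ j); rewrite jS /=.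
by rewrite gij.
Qed.

Theorem theorem1 (R : realType) (n : nat) (g : rel 'I_n) (z0 gamma : R) :
  simple_graph g -> 0 < z0 -> 0 < gamma ->
  z0 < (2 * Num.sqrt gamma)^-1 * ((n.+1)%:R / (n.*2.+1)%:R) ->
  forall C : contract R n, optimal g z0 gamma C ->
    max_independent g (target C) /\
    prec C = Num.sqrt ((alpha g)%:R / gamma) - z0 /\
    (forall i, i \in target C -> price C i = z0^-1 - Num.sqrt (gamma / (alpha g)%:R)).
Proof.
move=> Hsg Hz0 Hg Hcond C [[Hz Hp] Hopt].
have [Hsym Hirr] := Hsg.
have indep1 : forall i, independent g [set i].
  move=> i; apply/forallP => x; apply/implyP; rewrite in_set1 => /eqP->.
  apply/forallP => y; apply/implyP; rewrite in_set1 => /eqP->; exact: Hirr.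
have indep_le : forall S, independent g S -> (#|S| <= alpha g)%N.
  by move=> S HS; rewrite /alpha; exact: (@leq_bigmax_cond _ (fun S => independent g S) (fun S => #|S|) S HS).
have Hgz : 0 < gamma * prec C by apply: mulr_gt0.
case: (posnP (alpha g)) => [a0|apos].
  exfalso.
  have ME : target C = set0.
    apply/setP => i; rewrite in_set0; apply/negP => Hi.
    by have := indep_le _ (indep1 i); rewrite cards1 a0.
  have Hf : feasible g z0 (Contract set0 (prec C / 2) (price C)).
    split => /=; first by apply: divr_gt0.
    by move=> i; rewrite in_set0.
  have := Hopt _ Hf; rewrite /profit /= big_set0 ME big_set0.
  have : gamma * (prec C / 2) = gamma * prec C / 2 by rewrite mulrA.
  move=> ->; lra.
have [J0 HJ0 HJ0a] : exists2 J0 : {set 'I_n}, independent g J0 & alpha g = #|J0|.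
  have hpos : (0 < #|[pred S : {set 'I_n} | independent g S]|)%N.
    apply/card_gt0P; exists set0; rewrite inE.
    by apply/forallP => x; apply/implyP; rewrite in_set0.
  case: (eq_bigmax_cond (fun S : {set 'I_n} => #|S|) hpos) => J0 HJ0 HJ0a.
  by exists J0; [exact: HJ0 | exact: HJ0a].
have n_pos : (0 < n)%N.
  move: apos; rewrite HJ0a => /card_gt0P [i _]; exact: (leq_ltn_trans _ (ltn_ord i)).
set a := alpha g.
set s := Num.sqrt (a%:R / gamma).
have ha0 : 0 <= a%:R / gamma :> R by apply: divr_ge0; [rewrite ler0n | apply: ltW].
have hs2 : s ^+ 2 = a%:R / gamma by rewrite sqr_sqrtr.
have hs0 : 0 < s by rewrite sqrtr_gt0; apply: divr_gt0; [rewrite ltr0n | ].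
have ha : a%:R = gamma * s ^+ 2 :> R by rewrite hs2; field; rewrite lt0r_neq0.
have ha1 : 1 <= a%:R :> R by rewrite ler1n.
set rg := Num.sqrt gamma.
have hrg2 : rg ^+ 2 = gamma by rewrite sqr_sqrtr // ltW.
have hrg : 0 < rg by rewrite sqrtr_gt0.
have hq : (n.+1%:R / n.*2.+1%:R : R) <= 2 / 3.
  have hn1 : 1 <= n%:R :> R by rewrite ler1n.
  rewrite (_ : n.+1%:R = n%:R + 1 :> R); last by rewrite -addn1 natrD.
  rewrite (_ : n.*2.+1%:R = 2 * n%:R + 1 :> R); last by rewrite -addn1 -muln2 natrD natrM mulrC.
  apply: frac_le; lra.
have h3 : 3 * z0 < s.
  move: Hcond; rewrite mulrC ltr_pdivlMr; last by apply: mulr_gt0.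
  move=> Hc.
  have hsr : 1 <= s * rg.
    have : 1 <= (s * rg) ^+ 2 by rewrite exprMn hs2 hrg2 mulfVK // lt0r_neq0.
    have : 0 <= s * rg by apply: mulr_ge0; apply: ltW.
    nra.
  rewrite ltNge; apply/negP => H.
  have H' : 0 <= 3 * z0 - s by lra.
  have := mulr_ge0 H' (ltW hrg).
  rewrite -/rg in Hc; move: Hc hq; set q := (n.+1%:R / _); move=> Hc hq; nra.
have hzs : 0 < s - z0 by lra.
set Ps := pmax z0 0 (s - z0).
have hPs : 0 <= Ps.
  rewrite /Ps pmax0E //; last exact: ltW.
  apply: divr_ge0; [exact: ltW | apply: mulr_ge0; lra].
have Hf : feasible g z0 (Contract J0 (s - z0) (fun=> Ps)).
  split => //= i Hi; rewrite m0_indep //; split => //.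
have Hstar := Hopt _ Hf.
rewrite /profit /= sumr_const -mulr_natl -HJ0a -/a ha in Hstar.
have Hup : \sum_(i in target C) price C i <=
           \sum_(i in target C) pmax z0 (m_of g (target C) i) (prec C).
  by apply: ler_sum => i Hi; case: (Hp i Hi).
have [J [HJM HJi HJw]] := @caro_wei R n g Hsg (target C).
have HW : \sum_(i in target C) ((m_of g (target C) i).+1%:R)^-1 <= (a%:R : R).
  apply: le_trans HJw _; rewrite ler_nat; exact: indep_le.
rewrite /profit in Hstar.
set z := prec C in Hz Hp Hstar Hup Hgz *.
set M := target C in Hp Hstar Hup HJM HW HJw *.
case: (lerP z (z0 / 2)) => Hzc.
  exfalso.
  have H1 : \sum_(i in M) pmax z0 (m_of g M i) z <=
            \sum_(i in M) ((m_of g M i).+1%:R)^-1 * (3 / (8 * z0)).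
    by apply: ler_sum => i _; apply: small_bound.
  rewrite -mulr_suml in H1.
  have H2 : (\sum_(i in M) ((m_of g M i).+1%:R)^-1) * (3 / (8 * z0)) <= a%:R * (3 / (8 * z0)).
    by apply: ler_wpM2r => //; apply: divr_ge0 => //; apply: mulr_ge0 => //; apply: ltW.
  have H3 := @val_small R z0 gamma s Hz0 h3 Hg.
  have H4 := @val_opt R z0 gamma s Hz0 (ltac:(lra) : z0 < s) Hg.
  rewrite -ha in H3 H4 Hstar.
  rewrite -/Ps in H4.
  have : 0 <= gamma * z by apply: ltW.
  lra.
have H1 : \sum_(i in M) pmax z0 (m_of g M i) z <=
          \sum_(i in M) ((m_of g M i).+1%:R)^-1 * pmax z0 0 z.
  by apply: ler_sum => i _; case: (@large_bound R z0 z (m_of g M i) Hz0 Hzc).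
set Pz := pmax z0 0 z in H1 *.
have hPz : 0 < Pz.
  rewrite /Pz pmax0E //; last exact: ltW.
  apply: divr_gt0 => //; apply: mulr_gt0; lra.
have H1' := H1; rewrite -mulr_suml in H1'.
have H2 : (\sum_(i in M) ((m_of g M i).+1%:R)^-1) * Pz <= a%:R * Pz.
  by apply: ler_wpM2r => //; apply: ltW.
have H4 := @val_gap R z0 gamma s z Hz0 (ltac:(lra) : z0 < s) Hg Hz.
rewrite -ha -/Ps -/Pz in H4 Hstar.
have H5 : 0 <= gamma * (s - (z0 + z)) ^+ 2 / (z0 + z).
  apply: divr_ge0; [apply: mulr_ge0; [exact: (ltW Hg) | apply: sqr_ge0] | lra].
have hzeq : z = s - z0.
  have hX : (s - (z0 + z)) ^+ 2 <= 0.
    rewrite leNgt; apply/negP => hX.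
    have : 0 < gamma * (s - (z0 + z)) ^+ 2 / (z0 + z).
      apply: divr_gt0; [exact: mulr_gt0 | lra].
    lra.
  have : s - (z0 + z) = 0.
    by apply/eqP; rewrite -sqrf_eq0 eq_le hX sqr_ge0.
  lra.
have HsF := @sum_eq_le R _ (fun i => i \in M) (fun i => pmax z0 (m_of g M i) z)
  (fun i => ((m_of g M i).+1%:R)^-1 * Pz)
  (fun i _ => (@large_bound R z0 z (m_of g M i) Hz0 Hzc).1).
have Hm0 : forall i, i \in M -> m_of g M i = 0%N.
  move=> i Hi; apply: (@large_bound R z0 z (m_of g M i) Hz0 Hzc).2.
  apply: HsF => //; rewrite -mulr_suml; lra.
have HW1 : \sum_(i in M) ((m_of g M i).+1%:R)^-1 = (#|M|%:R : R).
  rewrite (eq_bigr (fun=> 1)); first by rewrite sumr_const.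
  by move=> i Hi; rewrite Hm0 // invr1.
have HMa : #|M| = a.
  apply/eqP; rewrite -(eqr_nat R); apply/eqP.
  apply: (mulIf (lt0r_neq0 hPz)); rewrite -HW1; lra.
have HsP := @sum_eq_le R _ (fun i => i \in M) (price C) (fun i => pmax z0 (m_of g M i) z)
  (fun i Hi => (Hp i Hi).2) (ltac:(lra)).
split; [split|split => //].
- apply/forallP => i; apply/implyP => Hi; apply/forallP => j; apply/implyP => Hj.
  apply/negP => gij.
  have := Hm0 i Hi; rewrite /m_of => /eqP; rewrite cards_eq0 => /eqP/setP/(_ j).
  rewrite !inE Hj gij /= => /negbT/negP; apply; apply/andP; split => //.
  case: eqP => [ji|//=]; by move: gij; rewrite ji (negbTE (Hirr i)).
- exact: HMa.
- move=> i Hi; rewrite HsP // Hm0 // hzeq -/Ps.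
  rewrite /Ps /pmax mul0r addr0 mul1r (_ : z0 + (s - z0) = s); last by ring.
  rewrite -[gamma / a%:R]invf_div sqrtrV //.
Qed.
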